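(* Let $\mathcal{X}\subseteq\mathbb{R}^d$ be closed convex, $\mathcal{Z}$ a set, $f:\mathcal{X}\times\mathcal{Z}\to\mathbb{R}$ with $f(\cdot,z)$ convex and $L$-Lipschitz for all $z$, and $S=(z_1,\dots,z_n)\in\mathcal{Z}^n$ with $F_S(x)=\frac1n\sum_{i=1}^nf(x,z_i)$. Let $\pi$ be an arbitrary permutation of $[n]$ and consider fixed-permutation SGD with step size constant within each epoch: $x^k_1=x^{k-1}_{n+1}$ and $x^k_{t+1}=\mathsf{Proj}_{\mathcal{X}}(x^k_t-\eta_k\nabla f(x^k_t,z_{\pi(t)}))$ for $t=1,\dots,n$, where $\eta_k>0$. Write $x^k=x^k_1$. Then for every epoch $k$ and every $y\in\mathcal{X}$, $$\eta_k[F_S(x^k)-F_S(y)]\le\frac1{2n}\big[\|x^k-y\|^2-\|x^{k+1}-y\|^2\big]+\frac{\eta_k^2L^2(n+2)}{2}.$$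
   Context: $\|\cdot\|$ is the Euclidean norm and $\mathsf{Proj}_{\mathcal{X}}$ the Euclidean projection; $\nabla f(x,z)$ is a fixed selection of a subgradient of $f(\cdot,z)$ at $x$, assumed to have norm at most $L$ (Lipschitz on an open set containing $\mathcal{X}$). *)

(* Defs.v *)
From HB Require Import structures.
From mathcomp Require Import all_boot all_order all_algebra all_fingroup.
From mathcomp Require Import all_classical all_reals all_analysis.
Set Implicit Arguments. Unset Strict Implicit. Unset Printing Implicit Defensive.
Import Order.TTheory GRing.Theory Num.Theory.
Import numFieldNormedType.Exports.
Local Open Scope ring_scope.
Local Open Scope classical_set_scope.

Definition dotv (R : realType) (d : nat) (u v : 'rV[R]_d) : R :=
  \sum_(i < d) u ord0 i * v ord0 i.
Definition enorm (R : realType) (d : nat) (u : 'rV[R]_d) : R :=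
  Num.sqrt (dotv u u).

Definition cvx_set (R : realType) (d : nat) (X : set 'rV[R]_d) : Prop :=
  forall x y t, X x -> X y -> 0 <= t -> t <= 1 -> X (t *: x + (1 - t) *: y).

Definition cvx_fun_on (R : realType) (d : nat) (X : set 'rV[R]_d)
  (h : 'rV[R]_d -> R) : Prop :=
  forall x y t, X x -> X y -> 0 <= t -> t <= 1 ->
    h (t *: x + (1 - t) *: y) <= t * h x + (1 - t) * h y.

Definition lip_on (R : realType) (d : nat) (X : set 'rV[R]_d)
  (L : R) (h : 'rV[R]_d -> R) : Prop :=
  forall x y, X x -> X y -> `|h x - h y| <= L * enorm (x - y).

Definition is_euclid_proj (R : realType) (d : nat) (X : set 'rV[R]_d)
  (P : 'rV[R]_d -> 'rV[R]_d) : Prop :=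
  forall x, X (P x) /\ forall y, X y -> enorm (x - P x) <= enorm (x - y).

Definition subgrad_on (R : realType) (d : nat) (X : set 'rV[R]_d)
  (h : 'rV[R]_d -> R) (g : 'rV[R]_d -> 'rV[R]_d) : Prop :=
  forall x y, X x -> X y -> h y >= h x + dotv (g x) (y - x).

Definition emp_risk (R : realType) (d n : nat) (Z : Type)
  (f : 'rV[R]_d -> Z -> R) (S : 'I_n -> Z) (x : 'rV[R]_d) : R :=
  n%:R^-1 * \sum_(i < n) f x (S i).

Definition sgd_epoch (R : realType) (d n : nat) (Z : Type)
  (P : 'rV[R]_d -> 'rV[R]_d) (g : 'rV[R]_d -> Z -> 'rV[R]_d)
  (S : 'I_n -> Z) (pi : 'S_n) (eta : R) (x : 'rV[R]_d) : 'rV[R]_d :=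
  foldl (fun y (t : 'I_n) => P (y - eta *: g y (S (pi t)))) x (enum 'I_n).

(* Epoch iterates: x^0 = x0, x^{k+1} = epoch with step eta k applied to x^k.
   (Paper's epoch k corresponds to index k here, shifted by one.) *)
Fixpoint sgd_iter (R : realType) (d n : nat) (Z : Type)
  (P : 'rV[R]_d -> 'rV[R]_d) (g : 'rV[R]_d -> Z -> 'rV[R]_d)
  (S : 'I_n -> Z) (pi : 'S_n) (eta : nat -> R) (x0 : 'rV[R]_d) (k : nat)
  : 'rV[R]_d :=
  match k with
  | 0 => x0
  | k'.+1 => sgd_epoch P g S pi (eta k') (sgd_iter P g S pi eta x0 k')
  end.

(* Main.v *)
Require Import Defs.
From HB Require Import structures.
From mathcomp Require Import all_boot all_order all_algebra all_fingroup.
From mathcomp Require Import all_classical all_reals all_analysis.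
From mathcomp Require Import ring lra.
Import Order.TTheory GRing.Theory Num.Theory.
Import numFieldNormedType.Exports.
Local Open Scope ring_scope.
Local Open Scope classical_set_scope.

Section V.
Context (R : realType) (d : nat).
Implicit Types u v w : 'rV[R]_d.

Lemma dotvC u v : dotv u v = dotv v u.
Proof. by apply: eq_bigr => i _; rewrite mulrC. Qed.
Lemma dotvDl u v w : dotv (u + v) w = dotv u w + dotv v w.
Proof. by rewrite /dotv -big_split; apply: eq_bigr => i _; rewrite mxE mulrDl. Qed.
Lemma dotvZl (c : R) u w : dotv (c *: u) w = c * dotv u w.
Proof. by rewrite /dotv mulr_sumr; apply: eq_bigr => i _; rewrite mxE mulrA. Qed.
Lemma dotvNl u w : dotv (- u) w = - dotv u w.
Proof. by rewrite -scaleN1r dotvZl mulN1r. Qed.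
Lemma dotvBl u v w : dotv (u - v) w = dotv u w - dotv v w.
Proof. by rewrite dotvDl dotvNl. Qed.
Lemma dotvDr u v w : dotv w (u + v) = dotv w u + dotv w v.
Proof. by rewrite dotvC dotvDl !(dotvC w). Qed.
Lemma dotvZr (c : R) u w : dotv w (c *: u) = c * dotv w u.
Proof. by rewrite dotvC dotvZl dotvC. Qed.
Lemma dotvBr u v w : dotv w (u - v) = dotv w u - dotv w v.
Proof. by rewrite dotvC dotvBl !(dotvC w). Qed.
Lemma dotv_ge0 u : 0 <= dotv u u.
Proof. by apply: sumr_ge0 => i _; rewrite -expr2 sqr_ge0. Qed.
Lemma enorm_sq u : enorm u ^+ 2 = dotv u u.
Proof. by rewrite /enorm sqr_sqrtr // dotv_ge0. Qed.
Lemma enorm_ge0 u : 0 <= enorm u.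
Proof. exact: sqrtr_ge0. Qed.
Lemma nsqB u v : dotv (u - v) (u - v) = dotv u u - 2 * dotv u v + dotv v v.
Proof. rewrite !dotvBl !dotvBr (dotvC v u); ring. Qed.
Lemma nsqBC u v : dotv (u - v) (u - v) = dotv (v - u) (v - u).
Proof. rewrite !nsqB (dotvC v u); ring. Qed.

Lemma proj_nonexp (X : set 'rV[R]_d) P w y :
  cvx_set X -> is_euclid_proj X P -> X y ->
  dotv (P w - y) (P w - y) <= dotv (w - y) (w - y).
Proof.
move=> cX hP Xy; have [Xp hmin] := hP w; set p := P w in Xp hmin *.
set e := w - p; set h := y - p.
have key : forall t, 0 <= t -> t <= 1 -> 2 * t * dotv e h <= t ^+ 2 * dotv h h.
  move=> t t0 t1; have := hmin _ (cX y p t Xy Xp t0 t1).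
  have -> : w - (t *: y + (1 - t) *: p) = e - t *: h.
    by apply/rowP => i; rewrite /e /h !mxE; ring.
  move=> H; have : enorm e ^+ 2 <= enorm (e - t *: h) ^+ 2.
    by rewrite lerXn2r // ?nnegrE ?enorm_ge0.
  rewrite -/e !enorm_sq (nsqB e) dotvZr dotvZl dotvZr; lra.
have hn : dotv e h <= 0.
  rewrite leNgt; apply/negP => a0.
  have b0 : 0 < dotv h h.
    have := key 1 ler01 (lexx _); lra.
  have := key (dotv e h / dotv h h) (divr_ge0 (ltW a0) (ltW b0)).
  have t1 : dotv e h / dotv h h <= 1.
    rewrite ler_pdivrMr // mul1r; have := key 1 ler01 (lexx _); lra.
  move/(_ t1).
  have -> : (dotv e h / dotv h h) ^+ 2 * dotv h h = dotv e h / dotv h h * dotv e h.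
    by rewrite expr2 -mulrA divfK ?gt_eqF.
  have : 0 < dotv e h / dotv h h * dotv e h by rewrite mulr_gt0 ?divr_gt0.
  nra.
have -> : w - y = e - h by rewrite /e /h opprB addrA subrK.
rewrite (nsqB e h) (nsqBC p y) -/h; have := dotv_ge0 e; lra.
Qed.

Lemma nsq_g_le u L : enorm u <= L -> dotv u u <= L ^+ 2.
Proof.
move=> h; rewrite -enorm_sq lerXn2r // ?nnegrE ?enorm_ge0 //.
exact: le_trans (enorm_ge0 u) h.
Qed.

Lemma step_lemma (Z : Type) (X : set 'rV[R]_d) (f : 'rV[R]_d -> Z -> R) (L : R)
  (g : 'rV[R]_d -> Z -> 'rV[R]_d) (P : 'rV[R]_d -> 'rV[R]_d) (eta : R) u z y :
  cvx_set X ->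
  (forall z, lip_on X L (f^~ z)) ->
  (forall z, subgrad_on X (f^~ z) (g^~ z)) ->
  (forall x z, X x -> enorm (g x z) <= L) ->
  is_euclid_proj X P -> 0 < eta -> X u -> X y ->
  let u' := P (u - eta *: g u z) in
  [/\ X u',
   dotv (u' - y) (u' - y) <= dotv (u - y) (u - y) - 2 * eta * (f u z - f y z) + eta ^+ 2 * L ^+ 2
   & forall z', f u z' - f u' z' <= eta * L ^+ 2].
Proof.
move=> cX hL hS hG hP e0 Xu Xy u'.
have Xu' : X u' by case: (hP (u - eta *: g u z)).
have gL := @nsq_g_le _ _ (hG u z Xu).
have L0 : 0 <= L by exact: le_trans (enorm_ge0 _) (hG u z Xu).
split => //.
  apply: le_trans (@proj_nonexp X P _ y cX hP Xy) _.
  have -> : u - eta *: g u z - y = (u - y) - eta *: g u z.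
    by apply/rowP => i; rewrite !mxE; ring.
  rewrite (nsqB (u - y)) dotvZr dotvZl dotvZr.
  have hs := hS z u y Xu Xy; rewrite /= dotvBr in hs.
  rewrite (dotvC (u - y) (g u z)) [dotv (g u z) (u - y)]dotvBr.
  have : eta ^+ 2 * dotv (g u z) (g u z) <= eta ^+ 2 * L ^+ 2 by rewrite ler_wpM2l // sqr_ge0.
  have : eta * (f u z - f y z) <= eta * (dotv (g u z) u - dotv (g u z) y).
    by apply: ler_wpM2l; [exact: ltW | lra].
  rewrite expr2; lra.
move=> z'.
have hd : dotv (u' - u) (u' - u) <= (eta * L) ^+ 2.
  apply: le_trans (@proj_nonexp X P _ u cX hP Xu) _.
  have -> : u - eta *: g u z - u = - (eta *: g u z).
    by apply/rowP => i; rewrite !mxE; ring.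
  rewrite dotvNl dotvC dotvNl opprK dotvZl dotvZr mulrA -expr2 exprMn.
  by rewrite ler_wpM2l // sqr_ge0.
have he : enorm (u' - u) <= eta * L.
  rewrite /enorm -(ger0_norm (mulr_ge0 (ltW e0) L0)) -sqrtr_sqr.
  by rewrite ler_sqrt // sqr_ge0.
have := hL z' u' u Xu' Xu; rewrite /=.
have : L * enorm (u' - u) <= L * (eta * L) by rewrite ler_wpM2l.
have := ler_norm (f u z' - f u' z'); rewrite distrC.
move=> a b c; have := le_trans a (le_trans c b).
rewrite expr2; lra.
Qed.
End V.

Lemma epoch_gen (R : realType) (d n : nat) (Z : Type)
  (X : set 'rV[R]_d) (f : 'rV[R]_d -> Z -> R) (L : R)
  (g : 'rV[R]_d -> Z -> 'rV[R]_d) (P : 'rV[R]_d -> 'rV[R]_d)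
  (Sv : 'I_n -> Z) (pi : 'S_n) (eta : R) (x1 y : 'rV[R]_d) (s : seq 'I_n) :
  cvx_set X ->
  (forall z, lip_on X L (f^~ z)) ->
  (forall z, subgrad_on X (f^~ z) (g^~ z)) ->
  (forall x z, X x -> enorm (g x z) <= L) ->
  is_euclid_proj X P -> 0 < eta -> X y ->
  forall u (m : nat), X u -> (forall z, f x1 z - f u z <= m%:R * eta * L ^+ 2) ->
  let v := foldl (fun y0 (t : 'I_n) => P (y0 - eta *: g y0 (Sv (pi t)))) u s in
  X v /\ dotv (v - y) (v - y) <= dotv (u - y) (u - y)
     - 2 * eta * \sum_(t <- s) (f x1 (Sv (pi t)) - f y (Sv (pi t)))
     + eta ^+ 2 * L ^+ 2 * ((size s)%:R * (2 * m%:R + (size s)%:R)).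
Proof.
move=> cX hL hS hG hP e0 Xy.
elim: s => [|t s IH] u m Xu hinv /=.
  by split => //; rewrite big_nil !(mulr0, mul0r) subr0 addr0.
have [Xu' hstep hlip] := @step_lemma _ _ _ X f L g P eta u (Sv (pi t)) y cX hL hS hG hP e0 Xu Xy.
set u' := P _ in Xu' hstep hlip *.
have hinv' : forall z, f x1 z - f u' z <= (m.+1)%:R * eta * L ^+ 2.
  move=> z; have := hinv z; have := hlip z; rewrite -natr1; lra.
have [Xv hv] := IH u' m.+1 Xu' hinv'.
split => //.
apply: le_trans hv _.
rewrite big_cons.
set k := (size s)%:R; set E := eta ^+ 2 * L ^+ 2.
set A := f x1 (Sv (pi t)) - f y (Sv (pi t)).
set B := \sum_(j <- s) _.
have h1 : 2 * eta * (f x1 (Sv (pi t)) - f u (Sv (pi t))) <= 2 * m%:R * E.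
  rewrite /E; have := hinv (Sv (pi t)).
  move=> hh; have := ler_wpM2l (ltW e0) hh.
  rewrite expr2; nra.
have -> : E * ((size s).+1%:R * (2 * m%:R + (size s).+1%:R))
   = E * (k * (2 * (m.+1)%:R + k)) + 2 * m%:R * E + E.
  by rewrite /k -addn1 -(addn1 m) !natrD; ring.
rewrite /E in h1 hstep *; rewrite /A /B /k; lra.
Qed.

Theorem lemmaC1 (R : realType) (d n : nat) (Z : Type)
  (X : set 'rV[R]_d) (f : 'rV[R]_d -> Z -> R) (L : R)
  (g : 'rV[R]_d -> Z -> 'rV[R]_d) (P : 'rV[R]_d -> 'rV[R]_d)
  (S : 'I_n -> Z) (pi : 'S_n) (eta : nat -> R) (x0 : 'rV[R]_d) :
  closed X -> cvx_set X ->
  (forall z, cvx_fun_on X (f^~ z)) ->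
  (forall z, lip_on X L (f^~ z)) ->
  (forall z, subgrad_on X (f^~ z) (g^~ z)) ->
  (forall x z, X x -> enorm (g x z) <= L) ->
  is_euclid_proj X P ->
  (0 < n)%N -> X x0 -> (forall k, 0 < eta k) ->
  forall (k : nat) (y : 'rV[R]_d), X y ->
    eta k * (emp_risk f S (sgd_iter P g S pi eta x0 k) - emp_risk f S y)
    <= (2 * n%:R)^-1 * (enorm (sgd_iter P g S pi eta x0 k - y) ^+ 2
                        - enorm (sgd_iter P g S pi eta x0 k.+1 - y) ^+ 2)
       + eta k ^+ 2 * L ^+ 2 * (n%:R + 2) / 2.
Proof.
move=> _ cX _ hL hS hG hP n0 Xx0 e0 k y Xy.
have Xit : forall j, X (sgd_iter P g S pi eta x0 j).
  elim=> [|j IH] //=.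
  have [] := @epoch_gen _ _ _ _ X f L g P S pi (eta j) (sgd_iter P g S pi eta x0 j) y
     (enum 'I_n) cX hL hS hG hP (e0 j) Xy (sgd_iter P g S pi eta x0 j) 0%N IH.
    by move=> z; rewrite subrr mul0r mul0r.
  by [].
set xk := sgd_iter P g S pi eta x0 k.
have [_ hv] := @epoch_gen _ _ _ _ X f L g P S pi (eta k) xk y
     (enum 'I_n) cX hL hS hG hP (e0 k) Xy xk 0%N (Xit k)
     (fun z => ltac:(by rewrite subrr mul0r mul0r)).
have -> : sgd_iter P g S pi eta x0 k.+1 = foldl (fun y0 (t : 'I_n) =>
   P (y0 - eta k *: g y0 (S (pi t)))) xk (enum 'I_n) by [].
move: hv; set xk1 := foldl _ _ _.
rewrite size_enum_ord big_enum /=.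
have hre : \sum_(i < n) (f xk (S i) - f y (S i)) = \sum_(i < n) (f xk (S (pi i)) - f y (S (pi i))) by rewrite (reindex_perm pi).
rewrite -hre.
rewrite !enorm_sq /emp_risk -mulrBr -sumrB.
set B := \sum_(i < n) _.
set D := dotv (xk - y) (xk - y); set D' := dotv (xk1 - y) (xk1 - y).
set N := n%:R; set E := eta k ^+ 2 * L ^+ 2.
move=> hv.
have N0 : 0 < N by rewrite /N ltr0n.
have E0 : 0 <= E by rewrite /E mulr_ge0 // sqr_ge0.
have ek := e0 k.
have I0 : 0 < (2 * N)^-1 by rewrite invr_gt0 mulr_gt0.
have IN : (2 * N)^-1 * (2 * N) = 1 by rewrite mulVf // gt_eqF // mulr_gt0.
have -> : eta k * (N^-1 * B) = (2 * N)^-1 * (2 * eta k * B).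
  by rewrite invfM; field; rewrite gt_eqF.
have h1 : (2 * N)^-1 * (2 * eta k * B) <= (2 * N)^-1 * (D - D' + E * (N * (2 * 0%:R + N))).
  by apply: ler_wpM2l; [exact: ltW | lra].
apply: le_trans h1 _.
have -> : (2 * N)^-1 * (D - D' + E * (N * (2 * 0%:R + N))) = (2 * N)^-1 * (D - D') + E * N / 2.
  by rewrite invfM; field; rewrite gt_eqF.
rewrite -mulrA; lra.
Qed.
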